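(* Let $\mathcal{H}$ be a complex Hilbert space and $T\in\mathbb{B}(\mathcal{H})$. Then $$\Omega(T) \leq \min\left\{\sqrt{\|TT^* + T^*T\|},\ \sqrt{\|T\|^2 + w(T^2)}\right\}.$$
   Context: $\mathbb{B}(\mathcal{H})$ is the algebra of bounded linear operators on $\mathcal{H}$, $\|\cdot\|$ the usual operator norm, and $w(T)=\sup\{|\langle Tx,x\rangle|:\|x\|=1\}$ the numerical radius. Dragomir's norm is $\Omega(T)=\sup\{\|\zeta T+\eta T^*\|:\ \zeta,\eta\in\mathbb{C},\ |\zeta|^2+|\eta|^2\le 1\}$. *)

(* Defs.v *)
From HB Require Import structures.
From mathcomp Require Import all_boot all_order all_algebra.
From mathcomp Require Import complex.
From mathcomp Require Import classical_sets reals.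
Set Implicit Arguments. Unset Strict Implicit. Unset Printing Implicit Defensive.
Import Order.TTheory GRing.Theory Num.Theory.
Local Open Scope ring_scope.
Local Open Scope classical_set_scope.

Section Hilbert.
Variable R : realType.
Local Notation C := (R[i]).

Definition cabs (z : C) : R := Num.sqrt (complex.Re z ^+ 2 + complex.Im z ^+ 2).

Variable V : lmodType C.
Variable ip : V -> V -> C.   (* inner product, linear in the first argument *)

Definition inner_product_axioms : Prop :=
  [/\ (forall (a : C) (x y z : V), ip (a *: x + y) z = a * ip x z + ip y z),
      (forall x y : V, ip y x = Num.conj (ip x y)),
      (forall x : V, complex.Im (ip x x) = 0 /\ 0 <= complex.Re (ip x x)) &
      (forall x : V, ip x x = 0 -> x = 0)].

Definition hnorm (x : V) : R := Num.sqrt (complex.Re (ip x x)).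

Definition hcomplete : Prop :=
  forall u : nat -> V,
    (forall e : R, 0 < e -> exists N : nat, forall m n : nat,
        (N <= m)%N -> (N <= n)%N -> hnorm (u m - u n) < e) ->
    exists l : V, forall e : R, 0 < e -> exists N : nat, forall n : nat,
        (N <= n)%N -> hnorm (u n - l) < e.

Definition hilbert_space : Prop := inner_product_axioms /\ hcomplete.

Definition bounded_operator (T : V -> V) : Prop :=
  [/\ (forall x y : V, T (x + y) = T x + T y),
      (forall (a : C) (x : V), T (a *: x) = a *: T x) &
      exists M : R, forall x : V, hnorm (T x) <= M * hnorm x].

Definition is_adjoint (T Ts : V -> V) : Prop :=
  forall x y : V, ip (T x) y = ip x (Ts y).

Definition opnorm (T : V -> V) : R :=
  sup [set hnorm (T x) | x in [set x : V | hnorm x <= 1]].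

Definition numrad (T : V -> V) : R :=
  sup [set cabs (ip (T x) x) | x in [set x : V | hnorm x = 1]].

(* Dragomir's norm Omega(T) = sup { ||zeta T + eta T^*|| : |zeta|^2+|eta|^2 <= 1 } *)
Definition dragomir (T Ts : V -> V) : R :=
  sup [set opnorm (fun x => p.1 *: T x + p.2 *: Ts x)
      | p in [set p : C * C | cabs p.1 ^+ 2 + cabs p.2 ^+ 2 <= 1]].

End Hilbert.

(* Main.v *)
Require Import Defs.
From HB Require Import structures.
From mathcomp Require Import all_boot all_order all_algebra.
From mathcomp Require Import complex.
From mathcomp Require Import classical_sets boolp reals.
From mathcomp Require Import ring lra.
Import Order.TTheory GRing.Theory Num.Theory.
Local Open Scope ring_scope.
Set Implicit Arguments.
Unset Strict Implicit.

Section Cplx.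
Variable R : realType.
Implicit Types z w : R[i].
Lemma ReD z w : complex.Re (z + w) = complex.Re z + complex.Re w.
Proof. by case: z => a b; case: w => c d. Qed.
Lemma ImD z w : complex.Im (z + w) = complex.Im z + complex.Im w.
Proof. by case: z => a b; case: w => c d. Qed.
Lemma ReM z w : complex.Re (z * w) = complex.Re z * complex.Re w - complex.Im z * complex.Im w.
Proof. by case: z => a b; case: w => c d. Qed.
Lemma ImM z w : complex.Im (z * w) = complex.Re z * complex.Im w + complex.Im z * complex.Re w.
Proof. by case: z => a b; case: w => c d. Qed.
Lemma ReJ z : complex.Re (Num.conj z) = complex.Re z.
Proof. by case: z => a b. Qed.
Lemma ImJ z : complex.Im (Num.conj z) = - complex.Im z.
Proof. by case: z => a b. Qed.
Lemma ReN z : complex.Re (- z) = - complex.Re z.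
Proof. by case: z => a b. Qed.
Lemma ImN z : complex.Im (- z) = - complex.Im z.
Proof. by case: z => a b. Qed.
Lemma ReC (r : R) : complex.Re (r%:C)%C = r. Proof. by []. Qed.
Lemma ImC (r : R) : complex.Im (r%:C)%C = 0. Proof. by []. Qed.
Lemma Re0 : complex.Re (0 : R[i]) = 0. Proof. by []. Qed.
Lemma Im0 : complex.Im (0 : R[i]) = 0. Proof. by []. Qed.
Lemma Re1 : complex.Re (1 : R[i]) = 1. Proof. by []. Qed.
Lemma Im1 : complex.Im (1 : R[i]) = 0. Proof. by []. Qed.
Lemma JM z w : Num.conj (z * w) = Num.conj z * Num.conj w.
Proof. exact: rmorphM. Qed.
Lemma JK z : Num.conj (Num.conj z) = z. Proof. exact: conjCK. Qed.
Lemma cplx_eq z w : complex.Re z = complex.Re w -> complex.Im z = complex.Im w -> z = w.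
Proof. by case: z => a b; case: w => c d /= -> ->. Qed.
Lemma JC (r : R) : Num.conj (r%:C)%C = (r%:C)%C.
Proof. by apply: cplx_eq; [rewrite ReJ | rewrite ImJ ImC oppr0]. Qed.

Lemma ReK (a b : R) : complex.Re (a +i* b)%C = a. Proof. by []. Qed.
Lemma ImK (a b : R) : complex.Im (a +i* b)%C = b. Proof. by []. Qed.
Definition cplxE := (ReD, ImD, ReM, ImM, ReJ, ImJ, ReN, ImN, ReC, ImC, Re0, Im0, Re1, Im1).

Lemma cabs_ge0 z : 0 <= cabs z. Proof. exact: sqrtr_ge0. Qed.
Lemma cabs_sq z : cabs z ^+ 2 = complex.Re z ^+ 2 + complex.Im z ^+ 2.
Proof. by rewrite /cabs sqr_sqrtr // addr_ge0 // sqr_ge0. Qed.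
Lemma le_sqrt_sq (x y : R) : x <= Num.sqrt (x ^+ 2 + y ^+ 2).
Proof.
have [x0|x0] := lerP x 0; first exact: le_trans x0 (sqrtr_ge0 _).
rewrite -{1}(ger0_norm (ltW x0)) -sqrtr_sqr ler_sqrt; last by rewrite addr_ge0 // sqr_ge0.
by rewrite lerDl sqr_ge0.
Qed.
Lemma Re_le_cabs z : complex.Re z <= cabs z. Proof. exact: le_sqrt_sq. Qed.
Lemma cabs_scale (r : R) z : cabs ((r%:C)%C * z) = `|r| * cabs z.
Proof.
rewrite /cabs ReM ImM ReC ImC !mul0r subr0 addr0.
have -> : (r * complex.Re z) ^+ 2 + (r * complex.Im z) ^+ 2 =
  r ^+ 2 * (complex.Re z ^+ 2 + complex.Im z ^+ 2) by ring.
by rewrite sqrtrM ?sqr_ge0 // sqrtr_sqr.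
Qed.
Lemma cabs0 : cabs (0 : R[i]) = 0.
Proof. by rewrite /cabs Re0 Im0 expr0n /= addr0 sqrtr0. Qed.

Lemma arith_cs (ar ai br bi cr ci : R) :
  (ar * br + ai * bi) * cr - (ai * br - ar * bi) * ci <=
  Num.sqrt (ar ^+ 2 + ai ^+ 2) * Num.sqrt (br ^+ 2 + bi ^+ 2) * Num.sqrt (cr ^+ 2 + ci ^+ 2).
Proof.
set X := _ - _.
have ha : 0 <= ar ^+ 2 + ai ^+ 2 by rewrite addr_ge0 ?sqr_ge0.
have hb : 0 <= br ^+ 2 + bi ^+ 2 by rewrite addr_ge0 ?sqr_ge0.
rewrite -sqrtrM // -sqrtrM ?mulr_ge0 //.
apply: (le_trans (ler_norm X)); rewrite -sqrtr_sqr ler_sqrt; last by rewrite !mulr_ge0 ?addr_ge0 ?sqr_ge0.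
rewrite -subr_ge0.
have -> : (ar ^+ 2 + ai ^+ 2) * (br ^+ 2 + bi ^+ 2) * (cr ^+ 2 + ci ^+ 2) - X ^+ 2 =
   ((ar * br + ai * bi) * ci + (ai * br - ar * bi) * cr) ^+ 2 by rewrite /X; ring.
exact: sqr_ge0.
Qed.
End Cplx.

Section H.
Variable R : realType.
Local Notation C := R[i].
Variable V : lmodType C.
Variable ip : V -> V -> C.
Hypothesis Hax : inner_product_axioms ip.

Let nsq (x : V) : R := complex.Re (ip x x).

Lemma ipDZl a x y z : ip (a *: x + y) z = a * ip x z + ip y z.
Proof. by case: Hax => h1 _ _ _; apply: h1. Qed.
Lemma ip_sym x y : ip y x = Num.conj (ip x y).
Proof. by case: Hax => _ h2 _ _; apply: h2. Qed.
Lemma ip_Im x : complex.Im (ip x x) = 0.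
Proof. by case: Hax => _ _ h _; case: (h x). Qed.
Lemma nsq_ge0 x : 0 <= nsq x.
Proof. by case: Hax => _ _ h _; case: (h x). Qed.
Lemma ip0l z : ip 0 z = 0.
Proof.
have := ipDZl 1 0 0 z; rewrite scaler0 addr0 mul1r => h.
have : ip 0 z + ip 0 z - ip 0 z = ip 0 z - ip 0 z by rewrite -h.
by rewrite addrK subrr.
Qed.
Lemma ipDl x y z : ip (x + y) z = ip x z + ip y z.
Proof. by rewrite -{1}(scale1r x) ipDZl mul1r. Qed.
Lemma ipZl a x z : ip (a *: x) z = a * ip x z.
Proof. by rewrite -(addr0 (a *: x)) ipDZl ip0l addr0. Qed.
Lemma ipDr x y z : ip z (x + y) = ip z x + ip z y.
Proof. by rewrite (ip_sym _ z) (ip_sym x z) (ip_sym y z) ipDl rmorphD. Qed.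
Lemma ipZr a x z : ip z (a *: x) = Num.conj a * ip z x.
Proof. by rewrite ip_sym ipZl JM -ip_sym. Qed.
Lemma ip0r z : ip z 0 = 0.
Proof. by rewrite ip_sym ip0l rmorph0. Qed.
Lemma ipBl x y z : ip (x - y) z = ip x z - ip y z.
Proof. by rewrite ipDl -scaleN1r ipZl mulN1r. Qed.
Lemma ipBr x y z : ip z (x - y) = ip z x - ip z y.
Proof. by rewrite ipDr -scaleN1r ipZr rmorphN1 mulN1r. Qed.
Lemma ipxx x : ip x x = ((nsq x)%:C)%C.
Proof. apply: (@cplx_eq R); first by rewrite ReC. by rewrite ImC ip_Im. Qed.
Lemma ip_eq0 x : ip x x = 0 -> x = 0.
Proof. by case: Hax => _ _ _ h; apply: h. Qed.

Lemma hnorm_sq x : hnorm ip x ^+ 2 = nsq x.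
Proof. by rewrite /hnorm sqr_sqrtr // nsq_ge0. Qed.
Lemma hnorm_ge0 x : 0 <= hnorm ip x.
Proof. exact: sqrtr_ge0. Qed.
Lemma hnorm_eq0 x : hnorm ip x = 0 -> x = 0.
Proof.
move=> /eqP; rewrite sqrtr_eq0 => h; apply: ip_eq0; rewrite ipxx.
have -> : nsq x = 0 by apply/eqP; rewrite eq_le h nsq_ge0.
by [].
Qed.
Lemma hnorm0 : hnorm ip 0 = 0.
Proof. by rewrite /hnorm ip0l Re0 sqrtr0. Qed.
Lemma hnorm_le_sqrt x r : nsq x <= r -> hnorm ip x <= Num.sqrt r.
Proof. by move=> h; apply: ler_wsqrtr. Qed.
Lemma hnorm_le x r : 0 <= r -> nsq x <= r ^+ 2 -> hnorm ip x <= r.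
Proof. by move=> r0 h; rewrite -(ger0_norm r0) -sqrtr_sqr; apply: hnorm_le_sqrt. Qed.

Lemma nsq_comb a b u v :
  nsq (a *: u + b *: v) =
  (complex.Re a ^+ 2 + complex.Im a ^+ 2) * nsq u
  + (complex.Re b ^+ 2 + complex.Im b ^+ 2) * nsq v
  + 2 * ((complex.Re a * complex.Re b + complex.Im a * complex.Im b) * complex.Re (ip u v)
      - (complex.Im a * complex.Re b - complex.Re a * complex.Im b) * complex.Im (ip u v)).
Proof.
rewrite /nsq ipDl !ipDr !ipZl !ipZr (ip_sym u v) !ipxx.
rewrite !cplxE; ring.
Qed.

Lemma nsq_scale (r : R) x : nsq ((r%:C)%C *: x) = r ^+ 2 * nsq x.
Proof.
have := nsq_comb (r%:C)%C 0 x x; rewrite scale0r addr0 => ->.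
rewrite !cplxE; ring.
Qed.
Lemma hnorm_scale (r : R) x : hnorm ip ((r%:C)%C *: x) = `|r| * hnorm ip x.
Proof. by rewrite /hnorm -/(nsq _) nsq_scale sqrtrM ?sqr_ge0 // sqrtr_sqr. Qed.

Lemma CS x y : cabs (ip x y) <= hnorm ip x * hnorm ip y.
Proof.
set c := ip x y.
have [b0|bpos] := eqVneq (nsq y) 0.
  have y0 : y = 0 by apply: ip_eq0; rewrite ipxx b0.
  by rewrite /c y0 ip0r cabs0 mulr_ge0 // hnorm_ge0.
have bgt : 0 < nsq y by rewrite lt_neqAle eq_sym bpos nsq_ge0.
set k := complex.Re c ^+ 2 + complex.Im c ^+ 2.
have key : forall t : R, 0 <= nsq x + t ^+ 2 * k * nsq y - 2 * t * k.
  move=> t.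
  have := nsq_ge0 (1 *: x + (((- t)%:C)%C * c) *: y).
  rewrite nsq_comb -/c !cplxE /k => h.

  lra.
have := key (nsq y)^-1.
set t := (nsq y)^-1 => h.
have tb : t * nsq y = 1 by rewrite mulVf.
have kle : k <= nsq x * nsq y.
  have : 0 <= nsq y * (nsq x + t ^+ 2 * k * nsq y - 2 * t * k) by rewrite mulr_ge0 // ltW.
  have -> : nsq y * (nsq x + t ^+ 2 * k * nsq y - 2 * t * k) =
     nsq x * nsq y + (t * nsq y) ^+ 2 * k - 2 * (t * nsq y) * k by ring.
  rewrite tb; lra.
rewrite /cabs -/k /hnorm -/(nsq x) -/(nsq y) -sqrtrM ?nsq_ge0 //.
exact: ler_wsqrtr.
Qed.

Lemma hnorm_triangle u v : hnorm ip (u + v) <= hnorm ip u + hnorm ip v.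
Proof.
apply: hnorm_le; first by rewrite addr_ge0 // hnorm_ge0.
have := nsq_comb 1 1 u v; rewrite !scale1r => ->.
have := CS u v; have := @Re_le_cabs R (ip u v).
rewrite !cplxE -!hnorm_sq.
have := hnorm_ge0 u; have := hnorm_ge0 v.
nra.
Qed.

End H.

Section Sup.
Variable R : realType.
Lemma le_sup_img (T : Type) (P : set T) (f : T -> R) M x :
  (forall y, P y -> f y <= M) -> P x -> f x <= sup [set f y | y in P].
Proof.
move=> hM Px; apply: ub_le_sup; last by exists x.
by exists M => _ [y Py <-]; apply: hM.
Qed.
Lemma sup_img_le (T : Type) (P : set T) (f : T -> R) M x0 :
  P x0 -> (forall y, P y -> f y <= M) -> sup [set f y | y in P] <= M.
Proof.
move=> P0 hM; apply: ge_sup; first by exists (f x0), x0.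
by move=> _ [y Py <-]; apply: hM.
Qed.
End Sup.


Lemma arith_cs' (R : realType) (a b c : R[i]) :
  (complex.Re a * complex.Re b + complex.Im a * complex.Im b) * complex.Re c
  - (complex.Im a * complex.Re b - complex.Re a * complex.Im b) * complex.Im c
  <= cabs a * cabs b * cabs c.
Proof. exact: arith_cs. Qed.

Section Ops.
Variable R : realType.
Variable V : lmodType R[i].
Variable ip : V -> V -> R[i].
Hypothesis Hax : inner_product_axioms ip.

Lemma opnorm_le (S : V -> V) B :
  (forall x, hnorm ip x <= 1 -> hnorm ip (S x) <= B) ->
  forall x, hnorm ip x <= 1 -> hnorm ip (S x) <= opnorm ip S.
Proof.
move=> hB x hx; rewrite /opnorm.
exact: (@le_sup_img R V [set x | hnorm ip x <= 1] (fun x => hnorm ip (S x)) B x hB hx).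
Qed.

Lemma opnorm_ge0 (S : V -> V) B :
  (forall x, hnorm ip x <= 1 -> hnorm ip (S x) <= B) -> 0 <= opnorm ip S.
Proof.
move=> hB; apply: le_trans (hnorm_ge0 ip (S 0)) _.
by apply: (opnorm_le hB); rewrite hnorm0 ?ler01.
Qed.

Lemma opnorm_hom (S : V -> V) B :
  (forall x, hnorm ip (S x) <= B * hnorm ip x) ->
  (forall (r : R) x, S ((r%:C)%C *: x) = (r%:C)%C *: S x) ->
  forall y, hnorm ip (S y) <= opnorm ip S * hnorm ip y.
Proof.
move=> hB hZ y; set h := hnorm ip y.
have [h0|hn0] := eqVneq h 0.
  have := hB y; rewrite -/h h0 !mulr0 => //.
have hgt : 0 < h by rewrite lt_neqAle eq_sym hn0 hnorm_ge0.
have hB1 : forall x, hnorm ip x <= 1 -> hnorm ip (S x) <= `|B|.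
  move=> x hx; apply: le_trans (hB x) _.
  have := ler_norm B; have := normr_ge0 B; have := hnorm_ge0 ip x; nra.
have hy : hnorm ip ((h^-1%:C)%C *: y) <= 1.
  by rewrite (hnorm_scale Hax) ger0_norm ?invr_ge0 ?(ltW hgt) // mulVf.
have := opnorm_le hB1 hy; rewrite hZ (hnorm_scale Hax) ger0_norm ?invr_ge0 ?(ltW hgt) // => h1.
have -> : hnorm ip (S y) = h * (h^-1 * hnorm ip (S y)) by rewrite mulrA mulfV ?mul1r.
by rewrite [_ * h]mulrC ler_pM2l.
Qed.

Lemma numrad_le (S : V -> V) B :
  (forall y, hnorm ip y = 1 -> cabs (ip (S y) y) <= B) ->
  forall y, hnorm ip y = 1 -> cabs (ip (S y) y) <= numrad ip S.
Proof.
move=> hB y hy; rewrite /numrad.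
exact: (@le_sup_img R V [set x | hnorm ip x = 1] (fun x => cabs (ip (S x) x)) B y hB hy).
Qed.

Lemma numrad_ge0 (S : V -> V) B :
  (forall y, hnorm ip y = 1 -> cabs (ip (S y) y) <= B) -> 0 <= numrad ip S.
Proof.
move=> hB; case: (pselect (exists x, hnorm ip x = 1)) => [[x hx]|n].
  exact: le_trans (cabs_ge0 _) (numrad_le hB hx).
rewrite /numrad sup_out //; case => -[_ [y hy _]] _; apply: n; exists y; exact: hy.
Qed.

Lemma numrad_hom (S : V -> V) B :
  (forall y, hnorm ip y = 1 -> cabs (ip (S y) y) <= B) ->
  (forall (r : R) x, S ((r%:C)%C *: x) = (r%:C)%C *: S x) ->
  forall x, cabs (ip (S x) x) <= numrad ip S * hnorm ip x ^+ 2.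
Proof.
move=> hB hZ x; set h := hnorm ip x.
have w0 := numrad_ge0 hB.
have [h0|hn0] := eqVneq h 0.
  have := CS Hax (S x) x; rewrite -/h h0 mulr0 expr0n /= mulr0 //.
have hgt : 0 < h by rewrite lt_neqAle eq_sym hn0 hnorm_ge0.
have hy : hnorm ip ((h^-1%:C)%C *: x) = 1.
  by rewrite (hnorm_scale Hax) ger0_norm ?invr_ge0 ?(ltW hgt) // mulVf.
have := numrad_le hB hy; rewrite hZ (ipZl Hax) (ipZr Hax) JC !cabs_scale.
rewrite ger0_norm ?invr_ge0 ?(ltW hgt) // => h1.
have -> : cabs (ip (S x) x) = h^-1 * (h^-1 * cabs (ip (S x) x)) * h ^+ 2.
  by field; rewrite hn0.
by rewrite ler_wpM2r // sqr_ge0.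
Qed.
End Ops.

Unset Implicit Arguments.
Set Strict Implicit.

Theorem theorem3p3 (R : realType) (V : lmodType R[i]) (ip : V -> V -> R[i])
  (HH : hilbert_space ip) (T Ts : V -> V)
  (HT : bounded_operator ip T) (HTs : is_adjoint ip T Ts) :
  dragomir ip T Ts <=
  Num.min (Num.sqrt (opnorm ip (fun x => T (Ts x) + Ts (T x))))
          (Num.sqrt (opnorm ip T ^+ 2 + numrad ip (fun x => T (T x)))).
Proof.
case: HH => Hax _; case: HT => TD TZ [M0 HM0].
set M := `|M0|.
have M0' : 0 <= M := normr_ge0 M0.
have HM : forall x, hnorm ip (T x) <= M * hnorm ip x.
  move=> x; apply: le_trans (HM0 x) _; apply: ler_wpM2r; first exact: hnorm_ge0.
  exact: ler_norm.
have TsZ : forall a x, Ts (a *: x) = a *: Ts x.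
  move=> a x; apply/eqP; rewrite -subr_eq0; apply/eqP; apply: (ip_eq0 Hax).
  set d := _ - _.
  have -> : ip d d = ip d (Ts (a *: x)) - ip d (a *: Ts x) by rewrite -(ipBr Hax).
  by rewrite -HTs !(ipZr Hax) -HTs subrr.
have HTsb : forall x, hnorm ip (Ts x) <= M * hnorm ip x.
  move=> x.
  have e : hnorm ip (Ts x) ^+ 2 = complex.Re (ip (T (Ts x)) x) by rewrite (hnorm_sq Hax) HTs.
  have h1 := Re_le_cabs (ip (T (Ts x)) x).
  have h2 := CS Hax (T (Ts x)) x.
  have h3 := HM (Ts x).
  have g1 := hnorm_ge0 ip (Ts x); have g2 := hnorm_ge0 ip x; have g3 := hnorm_ge0 ip (T (Ts x)).
  have g4 : 0 <= M * hnorm ip x by rewrite mulr_ge0.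
  have g5 : hnorm ip (T (Ts x)) * hnorm ip x <= M * hnorm ip (Ts x) * hnorm ip x by rewrite ler_wpM2r.
  nra.
set S := fun x => T (Ts x) + Ts (T x).
have HSb : forall x, hnorm ip (S x) <= (M * M + M * M) * hnorm ip x.
  move=> x; apply: le_trans (hnorm_triangle Hax _ _) _.
  have a1 := HM (Ts x); have a2 := HTsb x; have a3 := HTsb (T x); have a4 := HM x.
  have b1 : M * hnorm ip (Ts x) <= M * (M * hnorm ip x) by rewrite ler_wpM2l.
  have b2 : M * hnorm ip (T x) <= M * (M * hnorm ip x) by rewrite ler_wpM2l.
  lra.
have HS1 : forall x, hnorm ip x <= 1 -> hnorm ip (S x) <= opnorm ip S.
  apply: (opnorm_le (B := M * M + M * M)) => x hx.
  apply: le_trans (HSb x) _; rewrite -[leRHS]mulr1 ler_wpM2l //.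
  by rewrite addr_ge0 // mulr_ge0.
have HT1 : forall y, hnorm ip (T y) <= opnorm ip T * hnorm ip y.
  by apply: (opnorm_hom Hax HM) => r x; rewrite TZ.
have sT0 : 0 <= opnorm ip T.
  apply: (opnorm_ge0 Hax (B := M)) => x hx; apply: le_trans (HM x) _.
  by rewrite -[leRHS]mulr1 ler_wpM2l.
have HTTb : forall y, hnorm ip y = 1 -> cabs (ip (T (T y)) y) <= M * M.
  move=> y hy; apply: le_trans (CS Hax _ _) _; rewrite hy mulr1.
  apply: le_trans (HM _) _; rewrite ler_wpM2l //; apply: le_trans (HM _) _.
  by rewrite hy mulr1.
have Hw : forall x, cabs (ip (T (T x)) x) <= numrad ip (fun x => T (T x)) * hnorm ip x ^+ 2.
  by apply: (numrad_hom Hax HTTb) => r x; rewrite !TZ.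
have w0 : 0 <= numrad ip (fun x => T (T x)) := numrad_ge0 HTTb.
set sT := opnorm ip T; set sS := opnorm ip S; set w := numrad ip _.
rewrite /dragomir.
apply: (@sup_img_le R _ _ _ _ (0, 0)).
  by rewrite /= cabs0 expr0n /= addr0; apply: ler01.
move=> [z e] /= hze.
rewrite le_min; apply/andP; split.
- rewrite /opnorm; apply: (@sup_img_le R _ _ _ _ 0); first by rewrite /= hnorm0.
  move=> x /= hx; apply: hnorm_le_sqrt.
  rewrite (nsq_comb Hax) -!cabs_sq -!(hnorm_sq Hax).
  have hX := arith_cs' z e (ip (T x) (Ts x)).
  have hK := CS Hax (T x) (Ts x).
  have eS : complex.Re (ip (S x) x) = hnorm ip (T x) ^+ 2 + hnorm ip (Ts x) ^+ 2.
    rewrite !(hnorm_sq Hax) /S (ipDl Hax) ReD (HTs (Ts x) x).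
    by rewrite (ip_sym Hax x (Ts (T x))) -(HTs x (T x)) ReJ addrC.
  have hS : complex.Re (ip (S x) x) <= sS.
    apply: le_trans (Re_le_cabs _) _; apply: le_trans (CS Hax _ _) _.
    apply: le_trans (HS1 x hx); rewrite -[leRHS]mulr1 ler_wpM2l //; exact: hnorm_ge0.
  rewrite eS in hS.
  set A := cabs z in hze hX *; set B := cabs e in hze hX *; set K := cabs (ip (T x) (Ts x)) in hX hK *.
  set hu := hnorm ip (T x) in hK hS *; set hv := hnorm ip (Ts x) in hK hS *.
  have gA : 0 <= A := cabs_ge0 _. have gB : 0 <= B := cabs_ge0 _.
  have gK : 0 <= K := cabs_ge0 _. have gu : 0 <= hu := hnorm_ge0 _ _. have gv : 0 <= hv := hnorm_ge0 _ _.
  have gAB : 0 <= A * B by rewrite mulr_ge0.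
  have c1 : A * B * K <= A * B * (hu * hv) by rewrite ler_wpM2l.
  have c2 : 2 * (A * B * (hu * hv)) <= A ^+ 2 * hv ^+ 2 + B ^+ 2 * hu ^+ 2.
    have := sqr_ge0 (A * hv - B * hu); nra.
  have c3 : (A ^+ 2 + B ^+ 2) * (hu ^+ 2 + hv ^+ 2) <= hu ^+ 2 + hv ^+ 2.
    by rewrite -[leRHS]mul1r ler_wpM2r // addr_ge0 // sqr_ge0.
  lra.
- rewrite /opnorm; apply: (@sup_img_le R _ _ _ _ 0); first by rewrite /= hnorm0.
  move=> x /= hx; apply: hnorm_le_sqrt.
  rewrite (nsq_comb Hax) -!cabs_sq -!(hnorm_sq Hax).
  have hX := arith_cs' z e (ip (T x) (Ts x)).
  have hK : cabs (ip (T x) (Ts x)) <= w.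
    rewrite -HTs; apply: le_trans (Hw x) _.
    have := hnorm_ge0 ip x => hx0.
    have : hnorm ip x ^+ 2 <= 1 by rewrite -(expr1n _ 2) lerXn2r // ?nnegrE.
    move=> hx2; rewrite -[leRHS]mulr1 ler_wpM2l //.
  have hu : hnorm ip (T x) <= sT.
    apply: le_trans (HT1 x) _; rewrite -[leRHS]mulr1 ler_wpM2l //.
  have hv : hnorm ip (Ts x) <= sT.
    have e1 : hnorm ip (Ts x) ^+ 2 = complex.Re (ip (T (Ts x)) x) by rewrite (hnorm_sq Hax) HTs.
    have h1 := Re_le_cabs (ip (T (Ts x)) x).
    have h2 := CS Hax (T (Ts x)) x.
    have h3 : hnorm ip (T (Ts x)) <= sT * hnorm ip (Ts x) := HT1 (Ts x).
    have g1 := hnorm_ge0 ip (Ts x); have g2 := hnorm_ge0 ip x; have g3 := hnorm_ge0 ip (T (Ts x)).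
    have g5 : hnorm ip (T (Ts x)) * hnorm ip x <= hnorm ip (T (Ts x)) by rewrite -[leRHS]mulr1 ler_wpM2l.
    have k : hnorm ip (Ts x) ^+ 2 <= sT * hnorm ip (Ts x) by lra.
    have [//|lt] := lerP (hnorm ip (Ts x)) sT.
    have hp : 0 < hnorm ip (Ts x) := le_lt_trans sT0 lt.
    have : sT * hnorm ip (Ts x) < hnorm ip (Ts x) * hnorm ip (Ts x) by rewrite ltr_pM2r.
    rewrite -expr2; lra.
  set A := cabs z in hze hX *; set B := cabs e in hze hX *; set K := cabs (ip (T x) (Ts x)) in hX hK *.
  set hu' := hnorm ip (T x) in hu *; set hv' := hnorm ip (Ts x) in hv *.
  have gA : 0 <= A := cabs_ge0 _. have gB : 0 <= B := cabs_ge0 _.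
  have gK : 0 <= K := cabs_ge0 _. have gu : 0 <= hu' := hnorm_ge0 _ _. have gv : 0 <= hv' := hnorm_ge0 _ _.
  have c1 : 2 * (A * B * K) <= (A ^+ 2 + B ^+ 2) * w.
    have := sqr_ge0 (A - B); nra.
  have c2 : A ^+ 2 * hu' ^+ 2 <= A ^+ 2 * sT ^+ 2.
    by rewrite ler_wpM2l ?sqr_ge0 // lerXn2r // ?nnegrE.
  have c3 : B ^+ 2 * hv' ^+ 2 <= B ^+ 2 * sT ^+ 2.
    by rewrite ler_wpM2l ?sqr_ge0 // lerXn2r // ?nnegrE.
  have c4 : (A ^+ 2 + B ^+ 2) * (sT ^+ 2 + w) <= sT ^+ 2 + w.
    by rewrite -[leRHS]mul1r ler_wpM2r // addr_ge0 // sqr_ge0.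
  lra.
Qed.
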